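(* Let $n,m,p$ be positive integers and $A\in\mathbb{R}^{n\times n}$, $B\in\mathbb{R}^{n\times m}$, $C\in\mathbb{R}^{p\times n}$, $D\in\mathbb{R}^{p\times m}$ with $DD^T$ positive definite and $BD^T=0$. Fix $\tau\in[0,1]$, $c>0$, $V_0\in\mathcal{Q}_+^n$, and let $P_k,V_k,\theta_k$ be generated by the robust Kalman filter with parameter $\tau$ and tolerance $c$; set $\Phi_k=P_{k+1}^{-1}-V_{k+1}^{-1}$. Let $k\ge0$ and let $\bar d>0$ be such that $P_{k+1}\ge\bar dI_n$. Then $$\Phi_k\le\begin{cases}\dfrac{1-(1-\theta_k(1-\tau)\bar d)^{\frac1{1-\tau}}}{\bar d}\,I_n, & 0\le\tau<1,\\[3mm] \dfrac{1-\exp(-\theta_k\bar d)}{\bar d}\,I_n, & \tau=1.\end{cases}$$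
   Context: $\mathcal{Q}_+^n$ denotes the real symmetric positive definite $n\times n$ matrices; $\le$ is the Loewner order; $\|\cdot\|$ the spectral norm. For $P$ positive semidefinite, $L_P$ is any matrix with $P=L_PL_P^T$; matrix powers and $\exp$ of symmetric matrices are defined through eigendecomposition. The function $\gamma_\tau$: for positive semidefinite $P$ and $\theta\ge0$ with $\theta(1-\tau)\|P\|<1$, $\gamma_0(P,\theta)=-\log\det((I_n-\theta P)^{-1})+\mathrm{tr}((I_n-\theta P)^{-1}-I_n)$; for $0<\tau<1$, $\gamma_\tau(P,\theta)=\mathrm{tr}\big(-\frac{1}{\tau(1-\tau)}(I_n-\theta(1-\tau)L_P^TL_P)^{\frac{\tau}{\tau-1}}+\frac1{1-\tau}(I_n-\theta(1-\tau)L_P^TL_P)^{\frac{1}{\tau-1}}+\frac1\tau I_n\big)$; $\gamma_1(P,\theta)=\mathrm{tr}(\exp(\theta L_P^TL_P)(\theta L_P^TL_P-I_n)+I_n)$. Robust Kalman filter with parameter $\tau$ and tolerance $c$: for $k=0,1,\dots$, $P_{k+1}=A(V_k^{-1}+C^T(DD^T)^{-1}C)^{-1}A^T+BB^T$; $\theta_k$ is the unique $\theta>0$ with $\theta(1-\tau)\|P_{k+1}\|<1$ and $\gamma_\tau(P_{k+1},\theta)=c$; $V_{k+1}=L_{P_{k+1}}(I_n-\theta_k(1-\tau)L_{P_{k+1}}^TL_{P_{k+1}})^{\frac1{\tau-1}}L_{P_{k+1}}^T$ if $0\le\tau<1$ and $V_{k+1}=L_{P_{k+1}}\exp(\theta_kL_{P_{k+1}}^TL_{P_{k+1}})L_{P_{k+1}}^T$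 if $\tau=1$. *)

(* Defs.v *)
From HB Require Import structures.
From mathcomp Require Import all_boot all_order all_algebra.
From mathcomp Require Import classical_sets boolp reals sequences exp.
Set Implicit Arguments. Unset Strict Implicit. Unset Printing Implicit Defensive.
Import Order.TTheory GRing.Theory Num.Theory.
Local Open Scope ring_scope.
Local Open Scope classical_set_scope.

Section Defs.
Variable R : realType.

Definition psd n (M : 'M[R]_n) : Prop :=
  M^T = M /\ forall x : 'cV[R]_n, 0 <= (x^T *m M *m x) 0 0.
Definition pd n (M : 'M[R]_n) : Prop :=
  M^T = M /\ forall x : 'cV[R]_n, x != 0 -> 0 < (x^T *m M *m x) 0 0.

Definition loewner n (A B : 'M[R]_n) : Prop := psd (B - A).

Definition vnorm n (x : 'cV[R]_n) : R := Num.sqrt (\sum_i x i 0 ^+ 2).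
Definition specnorm n m (M : 'M[R]_(n, m)) : R :=
  sup [set vnorm (M *m x) | x in [set x : 'cV[R]_m | vnorm x = 1]].

Definition eigdec n (S : 'M[R]_n) : 'M[R]_n * 'rV[R]_n :=
  xget (1%:M, 0) [set p | p.1^T *m p.1 = 1%:M /\
                          S = p.1 *m diag_mx p.2 *m p.1^T].

Definition mfun n (f : R -> R) (S : 'M[R]_n) : 'M[R]_n :=
  let p := eigdec S in p.1 *m diag_mx (map_mx f p.2) *m p.1^T.

Definition Lfac n (P : 'M[R]_n) : 'M[R]_n := xget 0 [set L | P = L *m L^T].

Definition gamma n (tau : R) (P : 'M[R]_n) (theta : R) : R :=
  let L := Lfac P in
  if tau == 0 then
    - ln (\det (invmx (1%:M - theta *: P)))
    + \tr (invmx (1%:M - theta *: P) - 1%:M)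
  else if tau < 1 then
    let M := 1%:M - (theta * (1 - tau)) *: (L^T *m L) in
    \tr (- (1 / (tau * (1 - tau))) *: mfun (fun x => powR x (tau / (tau - 1))) M
         + (1 / (1 - tau)) *: mfun (fun x => powR x (1 / (tau - 1))) M
         + (1 / tau) *: 1%:M)
  else
    let M := theta *: (L^T *m L) in
    \tr (mfun expR M *m (M - 1%:M) + 1%:M).

(* one step of V: V_{k+1} from P_{k+1}, theta_k and a factor L of P_{k+1} *)
Definition Vnext n (tau : R) (L : 'M[R]_n) (theta : R) : 'M[R]_n :=
  if tau < 1 then
    L *m mfun (fun x => powR x (1 / (tau - 1)))
             (1%:M - (theta * (1 - tau)) *: (L^T *m L)) *m L^T
  else L *m mfun expR (theta *: (L^T *m L)) *m L^T.

End Defs.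

(* Main.v *)
Require Import Defs.
From HB Require Import structures.
From mathcomp Require Import all_boot all_order all_algebra.
From mathcomp Require Import classical_sets boolp reals sequences exp.
From mathcomp Require Import ring lra.
From mathcomp Require Import spectral sesquilinear complex.
From mathcomp Require Import convex hoelder interval_inference.
Import Order.TTheory GRing.Theory Num.Theory.
Set Implicit Arguments. Unset Strict Implicit. Unset Printing Implicit Defensive.
Local Open Scope ring_scope.

Section Helpers.
Variable R : realType.


Lemma trZ m n (a : R) (A : 'M[R]_(m, n)) : (a *: A)^T = a *: A^T.
Proof. by apply/matrixP => i j; rewrite !mxE. Qed.
Lemma trB m n (A B : 'M[R]_(m, n)) : (A - B)^T = A^T - B^T.
Proof. by apply/matrixP => i j; rewrite !mxE. Qed.
Lemma trD m n (A B : 'M[R]_(m, n)) : (A + B)^T = A^T + B^T.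
Proof. by apply/matrixP => i j; rewrite !mxE. Qed.

Lemma sqnorm_eq0 n (w : 'cV[R]_n) : (w^T *m w) 0 0 = 0 -> w = 0.
Proof.
rewrite mxE => h; apply/matrixP => i j; rewrite ord1 mxE.
have : \sum_(k < n) w k 0 ^+ 2 == 0.
  by apply/eqP; rewrite -[RHS]h; apply: eq_bigr => k _; rewrite mxE expr2.
move/eqP/psumr_eq0P => H; apply/eqP; rewrite -sqrf_eq0; apply/eqP/H => // k _.
exact: sqr_ge0.
Qed.

Lemma sqnorm_ge0 n (w : 'cV[R]_n) : 0 <= (w^T *m w) 0 0.
Proof.
rewrite mxE; apply: sumr_ge0 => k _; rewrite mxE -expr2; exact: sqr_ge0.
Qed.

Lemma inv_uniq n (A X : 'M[R]_n) : A *m X = 1%:M -> invmx A = X.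
Proof.
move=> h; have [Au _] := mulmx1_unit h.
by rewrite -[X](mulKmx Au) h mulmx1.
Qed.

Lemma quad_diag n (w : 'rV[R]_n) (y : 'cV[R]_n) :
  (forall i, 0 <= w 0 i) -> 0 <= (y^T *m diag_mx w *m y) 0 0.
Proof.
move=> w0; rewrite mul_mx_diag mxE; apply: sumr_ge0 => j _.
rewrite !mxE mulrAC; apply: mulr_ge0 => //; rewrite -expr2; exact: sqr_ge0.
Qed.

Lemma core_psd n (L U : 'M[R]_n) (mu g : 'rV[R]_n) (h : R) :
  L \in unitmx -> U^T *m U = 1%:M -> L^T *m L = U *m diag_mx mu *m U^T ->
  (forall i, 0 < g 0 i) -> (forall i, 0 <= h * mu 0 i - 1 + (g 0 i)^-1) ->
  psd (h%:M - (invmx (L *m L^T) - invmx (L *m U *m diag_mx g *m U^T *m L^T))).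
Proof.
move=> Lu UU K g0 hw.
have UU' : U *m U^T = 1%:M := mulmx1C UU.
set Li := invmx L.
have LiL : Li *m L = 1%:M by rewrite mulVmx.
have LLi : L *m Li = 1%:M by rewrite mulmxV.
have LTLiT : L^T *m Li^T = 1%:M by rewrite -trmx_mul LiL trmx1.
pose gi := \row_i (g 0 i)^-1.
have invP : invmx (L *m L^T) = Li^T *m Li.
  apply: inv_uniq; rewrite mulmxA -[L *m L^T *m Li^T]mulmxA LTLiT mulmx1 //.
have Ggi : diag_mx g *m diag_mx gi = 1%:M.
  apply/matrixP => i j; rewrite mul_diag_mx !mxE.
  have [->|ij] := eqVneq i j; first by rewrite !mulr1n mulfV // gt_eqF.
  by rewrite !mulr0n mulr0.
have invV : invmx (L *m U *m diag_mx g *m U^T *m L^T) =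
    Li^T *m U *m diag_mx gi *m U^T *m Li.
  apply: inv_uniq.
  rewrite !mulmxA -[_ *m L^T *m Li^T]mulmxA LTLiT mulmx1.
  rewrite -[_ *m U^T *m U]mulmxA UU mulmx1 -[_ *m diag_mx g *m diag_mx gi]mulmxA Ggi mulmx1.
  by rewrite -[L *m U *m U^T]mulmxA UU' mulmx1.
pose wv := \row_i (h * mu 0 i - 1 + (g 0 i)^-1).
have Dw : diag_mx wv = h *: diag_mx mu - 1%:M + diag_mx gi.
  apply/matrixP => i j; rewrite !mxE.
  have [->|ij] := eqVneq i j; first by rewrite !mulr1n.
  by rewrite !mulr0n mulr0 subr0 addr0.
have ZE : h%:M - (invmx (L *m L^T) - invmx (L *m U *m diag_mx g *m U^T *m L^T)) =
    Li^T *m U *m diag_mx wv *m U^T *m Li.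
  rewrite invP invV Dw !mulmxDr !mulmxDl !mulmxN !mulNmx.
  rewrite -!scalemxAr -!scalemxAl.
  have LiTLT : Li^T *m L^T = 1%:M by rewrite -trmx_mul LLi trmx1.
  have e1 : Li^T *m U *m diag_mx mu *m U^T *m Li = 1%:M.
    transitivity (Li^T *m (L^T *m L) *m Li); first by rewrite K !mulmxA.
    by rewrite mulmxA LiTLT mul1mx LLi.
  rewrite e1 mulmx1 -[Li^T *m U *m U^T]mulmxA UU' mulmx1 scalemx1.
  by rewrite opprB addrA addrAC.
split.
  rewrite ZE !trmx_mul !trmxK tr_diag_mx !mulmxA //.
move=> x; rewrite ZE.
pose y := U^T *m Li *m x.
have -> : x^T *m (Li^T *m U *m diag_mx wv *m U^T *m Li) *m x = y^T *m diag_mx wv *m y.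
  by rewrite /y !trmx_mul !trmxK !mulmxA.
apply: quad_diag => i; rewrite mxE; exact: hw.
Qed.

Lemma eig_vec n (P L U : 'M[R]_n) (mu : 'rV[R]_n) (i : 'I_n) :
  L \in unitmx -> P = L *m L^T -> U^T *m U = 1%:M ->
  L^T *m L = U *m diag_mx mu *m U^T ->
  exists w : 'cV[R]_n, w != 0 /\ P *m w = mu 0 i *: w.
Proof.
move=> Lu PE UU K.
pose u : 'cV[R]_n := U *m delta_mx i 0.
have Dd : diag_mx mu *m delta_mx i (0 : 'I_1) = mu 0 i *: delta_mx i 0.
  apply/matrixP => k j; rewrite mul_diag_mx !mxE.
  by have [->|ki] := eqVneq k i; rewrite ?mulr1 ?mulr0 //= andFb mulr0.
have Ku : L^T *m L *m u = mu 0 i *: u.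
  by rewrite K /u -!mulmxA [U^T *m _]mulmxA UU mul1mx Dd scalemxAr.
exists (L *m u); split.
  apply/eqP => h.
  have : U^T *m (invmx L *m (L *m u)) = 0 by rewrite h mulmx0 mulmx0.
  rewrite mulKmx // /u mulmxA UU mul1mx => /matrixP /(_ i 0).
  by rewrite !mxE !eqxx /= => /eqP; rewrite oner_eq0.
rewrite PE -!mulmxA [L^T *m (L *m u)]mulmxA Ku scalemxAr. by rewrite !scalemxAr.
Qed.

Lemma eig_lb n (P : 'M[R]_n) (w : 'cV[R]_n) (m dbar : R) :
  psd (P - dbar%:M) -> w != 0 -> P *m w = m *: w -> dbar <= m.
Proof.
move=> [_ hq] w0 Pw; have := hq w.
rewrite -mulmxA mulmxBl Pw mul_scalar_mx -scalerBl -scalemxAr mxE.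
have : 0 < (w^T *m w) 0 0.
  rewrite lt0r sqnorm_ge0 andbT; apply/eqP => /sqnorm_eq0 h; by rewrite h eqxx in w0.
move=> q0; rewrite pmulr_lge0 // subr_ge0 //.
Qed.

Lemma vnormZ n (a : R) (x : 'cV[R]_n) : vnorm (a *: x) = `|a| * vnorm x.
Proof.
rewrite /vnorm (eq_bigr (fun i => a ^+ 2 * x i 0 ^+ 2)); last first.
  by move=> i _; rewrite mxE exprMn.
by rewrite -mulr_sumr sqrtrM ?sqr_ge0 // sqrtr_sqr.
Qed.

Lemma vnorm_gt0 n (x : 'cV[R]_n) : x != 0 -> 0 < vnorm x.
Proof.
move=> x0; rewrite /vnorm sqrtr_gt0 lt0r sumr_ge0 ?andbT; last by move=> i _; exact: sqr_ge0.
apply/eqP => /psumr_eq0P h; move/eqP: x0; apply; apply/matrixP => i j.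
rewrite ord1 mxE; apply/eqP; rewrite -sqrf_eq0; apply/eqP/h => // k _; exact: sqr_ge0.
Qed.

Lemma vnorm_ge0 n (x : 'cV[R]_n) : 0 <= vnorm x.
Proof. exact: sqrtr_ge0. Qed.

Lemma eig_le_spec n (P : 'M[R]_n) (w : 'cV[R]_n) (m : R) :
  w != 0 -> P *m w = m *: w -> 0 <= m -> m <= specnorm P.
Proof.
move=> w0 Pw m0; rewrite /specnorm; apply: ub_le_sup; last first.
  exists ((vnorm w)^-1 *: w).
    rewrite /= vnormZ ger0_norm ?invr_ge0 ?vnorm_ge0 // mulVf // gt_eqF //.
    exact: vnorm_gt0.
  rewrite -scalemxAr Pw scalerA vnormZ ger0_norm; last first.
    by rewrite mulr_ge0 // invr_ge0 vnorm_ge0.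
  by rewrite mulrAC mulVf ?mul1r // gt_eqF // vnorm_gt0.
exists (Num.sqrt (\sum_i (\sum_j `|P i j|) ^+ 2)).
move=> _ [x /= x1 <-]; rewrite /vnorm ler_sqrt; last first.
  by apply: sumr_ge0 => i _; exact: sqr_ge0.
have xs : \sum_i x i 0 ^+ 2 = 1.
  move: x1; rewrite /vnorm => h.
  by rewrite -(@sqr_sqrtr _ (\sum_i x i 0 ^+ 2)) ?h ?expr1n //; apply: sumr_ge0 => i _; exact: sqr_ge0.
have xj : forall j, `|x j 0| <= 1.
  move=> j; have : x j 0 ^+ 2 <= 1.
    rewrite -xs (bigD1 j) //= lerDl; apply: sumr_ge0 => i _; exact: sqr_ge0.
  rewrite -real_normK ?num_real // => h.
  have := normr_ge0 (x j 0); nra.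
apply: ler_sum => i _.
have hi : `|(P *m x) i 0| <= \sum_j `|P i j|.
  rewrite mxE; apply: (le_trans (ler_norm_sum _ _ _)); apply: ler_sum => j _.
  rewrite normrM; apply: ler_piMr => //.
rewrite -real_normK ?num_real //; apply: lerXn2r => //; rewrite ?nnegrE ?normr_ge0 //.
exact: le_trans hi.
Qed.










Definition e0v n : 'cV[R]_(1 + n) := col_mx (1%:M : 'M_1) 0.

Lemma e0v_norm n : (e0v n)^T *m e0v n = 1%:M.
Proof. by rewrite /e0v tr_col_mx mul_row_col mulmx1 mulmx0 addr0 trmx1. Qed.

Lemma householder n (v : 'cV[R]_(1 + n)) : v^T *m v = 1%:M ->
  exists Q : 'M[R]_(1 + n), Q^T *m Q = 1%:M /\ Q *m e0v n = v.
Proof.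
move=> vn.
pose w := e0v n - v.
pose q := (w^T *m w) 0 0.
have [q0|q0] := eqVneq q 0.
  exists 1%:M; rewrite trmx1 mulmx1 mul1mx; split => //.
  by have /eqP := sqnorm_eq0 q0; rewrite subr_eq0 => /eqP.
pose al := (v^T *m e0v n) 0 0.
have alE : v^T *m e0v n = al%:M by apply: mx11_scalar.
have alE' : (e0v n)^T *m v = al%:M.
  by rewrite -[_^T *m v]trmxK trmx_mul trmxK alE tr_scalar_mx.
have wE : w^T *m w = q%:M by apply: mx11_scalar.
have qE : q = 2 * (1 - al).
  have : w^T *m w = (2 * (1 - al))%:M.
    have wT : w^T = (e0v n)^T - v^T by rewrite /w linearB.
    rewrite wT /w mulmxDl !mulmxDr !mulNmx !mulmxN e0v_norm vn alE alE'.
    by rewrite opprK; apply/matrixP => i j; rewrite !ord1 !mxE eqxx /= !mulr1n; ring.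
  by rewrite wE => /matrixP /(_ 0 0); rewrite !mxE eqxx /= !mulr1n.
pose H := 1%:M - (2 / q) *: (w *m w^T).
exists H; split.
  have HT : H^T = H.
    rewrite /H linearB /= trmx1 linearZ /= trmx_mul trmxK //.
  rewrite HT /H mulmxDl !mulmxDr !mul1mx mulmx1 !mulNmx !mulmxN.
  rewrite -!scalemxAl -!scalemxAr !scalerA !mulmxA -[w *m w^T *m w]mulmxA wE.
  rewrite mul_mx_scalar -scalemxAl scalerA opprK.
  have -> : 2 / q * (2 / q) * q = 2 / q + 2 / q by field.
  by rewrite scalerDl addKr subrK.
rewrite /H mulmxBl mul1mx -scalemxAl -mulmxA.
have -> : w^T *m e0v n = (1 - al)%:M.
  rewrite /w linearB mulmxBl e0v_norm alE.
  by apply/matrixP => i j; rewrite !ord1 !mxE eqxx /= !mulr1n.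
rewrite mul_mx_scalar scalerA.
have -> : 2 / q * (1 - al) = 1 by rewrite qE; field; move: q0; rewrite qE; apply: contraNneq => ->; rewrite mulr0.
by rewrite scale1r /w opprB addrC subrK.
Qed.
Local Notation C := (complex R).
Local Notation f := (real_complex R).

Lemma sym_eigen (n : nat) (S : 'M[R]_n.+1) : S^T = S ->
  exists r (v : 'rV[R]_n.+1), v *m S = r *: v /\ v != 0.
Proof.
move=> Ssym.
pose SC := map_mx f S.
have SCh : SC \is hermsymmx.
  apply: realsym_hermsym.
    by rewrite qualifE /= expr0 scale1r map_mx_id // /SC map_trmx Ssym.
  apply/mxOverP => i j; rewrite mxE realE ler0c; have := num_real (S i j).
  rewrite realE => /orP[->//|h]; apply/orP; right.
  by rewrite (_ : 0 = (0:R)%:C%C) // lecR.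
have SCn : SC \is normalmx by apply: hermitian_normalmx.
have Hsp := hermitian_spectral_diag_real SCh.
have /orthomx_spectralP HA := SCn.
set P := spectralmx SC in HA; set sp := spectral_diag SC in HA Hsp.
have Pu : P \in unitmx by apply: spectral_unit.
pose a := sp 0 0.
pose vC := row 0 P.
have HvC : vC *m SC = a *: vC.
  have E : P *m SC = diag_mx sp *m P by rewrite {1}HA !mulmxA mulmxV // mul1mx.
  by rewrite /vC -row_mul E row_mul row_diag_mx -scalemxAl -rowE.
have vC0 : vC != 0.
  apply/eqP => h; have := congr1 (mulmx^~ (invmx P)) h.
  rewrite mul0mx /vC -row_mul mulmxV // => /rowP /(_ 0); rewrite !mxE eqxx /=.
  by move/eqP; rewrite oner_eq0.
have ev : eigenvalue SC a by apply/eigenvalueP; exists vC.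
have ar : a \is Num.real by apply: (mxOverP Hsp).
have aE : a = f (complex.Re a) by rewrite complexRe; apply/esym/Creal_ReP.
rewrite eigenvalue_root_char /SC -map_char_poly aE fmorph_root in ev.
rewrite -eigenvalue_root_char in ev.
have [v Hv v0] := eigenvalueP ev.
by exists (complex.Re a), v.
Qed.


Lemma spectral_real n (S : 'M[R]_n) : S^T = S ->
  exists U (d : 'rV[R]_n), U^T *m U = 1%:M /\ S = U *m diag_mx d *m U^T.
Proof.
elim: n S => [|n IH] S Ssym.
  exists 1%:M, 0; rewrite trmx1 mulmx1; split => //.
  by rewrite [S]flatmx0 [RHS]flatmx0.
have [r [v0 [Hv0 v00]]] := sym_eigen Ssym.
pose N := (v0 *m v0^T) 0 0.
have N0 : 0 < N.
  rewrite lt0r; apply/andP; split.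
    apply/eqP => h; move/eqP: v00; apply; apply: trmx_inj; rewrite trmx0.
    by apply: sqnorm_eq0; rewrite trmxK.
  by have := sqnorm_ge0 v0^T; rewrite trmxK.
pose u : 'cV[R]_(1 + n) := (Num.sqrt N)^-1 *: v0^T.
have un : u^T *m u = 1%:M.
  rewrite /u trZ trmxK -scalemxAl -scalemxAr scalerA (mx11_scalar (v0 *m v0^T)) -/N.
  rewrite -mul_scalar_mx -scalar_mxM; congr (_%:M).
  by rewrite -invfM -expr2 sqr_sqrtr ?mulVf // ?gt_eqF // ltW.
have Su : S *m u = r *: u.
  rewrite /u -scalemxAr scalerA mulrC -scalerA; congr (_ *: _).
  by rewrite -[S]Ssym -trmx_mul Hv0 trZ.
have [Q [QQ Qe]] := householder un.
pose T := Q^T *m S *m Q.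
have TT : T^T = T by rewrite /T !trmx_mul trmxK Ssym mulmxA.
have Te : T *m e0v n = r *: e0v n.
  by rewrite /T -!mulmxA Qe Su -scalemxAr -Qe mulmxA QQ mul1mx.
have lT : lsubmx T = r *: e0v n.
  by rewrite -Te -[T in RHS]hsubmxK /e0v mul_row_col mulmx1 mulmx0 addr0.
have ulT : ulsubmx T = r%:M.
  have -> : ulsubmx T = usubmx (lsubmx T) by apply/matrixP => i j; rewrite !mxE.
  by rewrite lT /e0v scale_col_mx col_mxKu scalemx1.
have dlT : dlsubmx T = 0.
  have -> : dlsubmx T = dsubmx (lsubmx T) by apply/matrixP => i j; rewrite !mxE.
  by rewrite lT /e0v scale_col_mx col_mxKd scaler0.
have urT : ursubmx T = 0.
  have : ursubmx T^T = 0 by rewrite -trmx_dlsub dlT trmx0.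
  by rewrite TT.
have drT : (drsubmx T)^T = drsubmx T by rewrite trmx_drsub TT.
have [U' [d' [UU' dE]]] := IH _ drT.
have TE : T = block_mx r%:M 0 0 (U' *m diag_mx d' *m U'^T).
  by rewrite -dE -ulT -urT -dlT submxK.
have SE : S = Q *m T *m Q^T.
  by rewrite /T !mulmxA (mulmx1C QQ) mul1mx -mulmxA (mulmx1C QQ) mulmx1.
have d1 : diag_mx (r%:M : 'rV[R]_1) = r%:M.
  by apply/matrixP => i j; rewrite !ord1 !mxE.
pose W : 'M[R]_(1 + n) := block_mx 1%:M 0 0 U'.
have WT : W^T = block_mx 1%:M 0 0 U'^T by rewrite tr_block_mx trmx1 !trmx0.
have WW : W^T *m W = 1%:M.
  by rewrite WT mulmx_block !mulmx0 !mul0mx !mulmx1 !addr0 !add0r UU' scalar_mx_block.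
have TE' : T = W *m diag_mx (row_mx (r%:M : 'rV[R]_1) d') *m W^T.
  rewrite TE WT diag_mx_row d1 !mulmx_block !mulmx0 !mul0mx !mulmx1 !mul1mx !addr0 !add0r.
  by rewrite mul0mx.
exists (Q *m W), (row_mx r%:M d'); split.
  by rewrite trmx_mul mulmxA -[_ *m Q^T *m Q]mulmxA QQ mulmx1 WW.
by rewrite SE TE' trmx_mul !mulmxA.
Qed.

Lemma i01_ex (s : R) : 0 <= s -> s <= 1 -> exists t : {i01 R}, t%:num = s.
Proof.
move=> s0 s1.
have sp : Itv.spec (@Itv.num_sem R) (Itv.Real `[0%Z, 1%Z]) s.
  by rewrite /= /Itv.num_sem /= in_itv /= num_real s0 s1.
by exists (Itv.mk sp).
Qed.

Lemma powR_conv (b s x y : R) : 1 <= b -> 0 <= s -> s <= 1 -> 0 <= x -> 0 <= y ->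
  powR (s * x + (1 - s) * y) b <= s * powR x b + (1 - s) * powR y b.
Proof.
move=> b1 s0 s1 x0 y0; have [t <-] := i01_ex s0 s1.
have := @convex_powR R b b1 t x y.
rewrite !inE /= !in_itv /= x0 y0 => /(_ isT isT).
by rewrite !convRE.
Qed.

Lemma expR_conv (s x y : R) : 0 <= s -> s <= 1 ->
  expR (s * x + (1 - s) * y) <= s * expR x + (1 - s) * expR y.
Proof.
move=> s0 s1; have [t <-] := i01_ex s0 s1.
have := @convex_expR R t x y.
by rewrite !convRE.
Qed.

Lemma eigdec_spec n (S : 'M[R]_n) : S^T = S ->
  (eigdec S).1^T *m (eigdec S).1 = 1%:M /\
  S = (eigdec S).1 *m diag_mx (eigdec S).2 *m (eigdec S).1^T.
Proof.
move=> Ssym; rewrite /eigdec.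
have [U [d [UU SE]]] := spectral_real Ssym.
pose Pr : set ('M[R]_n * 'rV[R]_n) := fun p => p.1^T *m p.1 = 1%:M /\
                          S = p.1 *m diag_mx p.2 *m p.1^T.
have : Pr (xget (1%:M, 0) Pr) by apply: xgetPex; exists (U, d).
by [].
Qed.

End Helpers.

Theorem lemma3 (R : realType) (n m p : nat)
  (hn : (0 < n)%N) (hm : (0 < m)%N) (hp : (0 < p)%N)
  (A : 'M[R]_n) (B : 'M[R]_(n, m)) (C : 'M[R]_(p, n)) (D : 'M[R]_(p, m))
  (hD : pd (D *m D^T)) (hBD : B *m D^T = 0)
  (tau c : R) (htau0 : 0 <= tau) (htau1 : tau <= 1) (hc : 0 < c)
  (P V : nat -> 'M[R]_n) (theta : nat -> R)
  (hV0 : pd (V 0%N))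
  (hP : forall k, P k.+1 =
          A *m invmx (invmx (V k) + C^T *m invmx (D *m D^T) *m C) *m A^T
          + B *m B^T)
  (htheta : forall k, 0 < theta k /\
          theta k * (1 - tau) * specnorm (P k.+1) < 1 /\
          gamma tau (P k.+1) (theta k) = c)
  (hV : forall k, exists L : 'M[R]_n,
          P k.+1 = L *m L^T /\ V k.+1 = Vnext tau L (theta k))
  (k : nat) (dbar : R) (hdbar : 0 < dbar)
  (hPd : loewner (dbar%:M) (P k.+1)) :
  loewner (invmx (P k.+1) - invmx (V k.+1))
    ((if tau < 1 then
        (1 - powR (1 - theta k * (1 - tau) * dbar) (1 / (1 - tau))) / dbar
      else (1 - expR (- (theta k * dbar))) / dbar)%:M).

Proof.
have [th0 [thn _]] := htheta k.
have [L [PL VE]] := hV k.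
rewrite VE.
move: hPd thn; rewrite PL => hPd thn.
set th := theta k in th0 thn *.
have Lu : L \in unitmx.
  rewrite unitmxE unitfE; apply/eqP => dL.
  have : \det (L *m L^T) == 0 by rewrite det_mulmx dL mul0r.
  move/det0P => [v v0 vP].
  have := hPd.2 v^T; rewrite trmxK mulmxBr vP sub0r mul_mx_scalar mulNmx -scalemxAl.
  rewrite mxE mxE oppr_ge0 pmulr_rle0 //.
  have := sqnorm_ge0 v^T; rewrite trmxK => hge h.
  have h0 : (v *m v^T) 0 0 = 0 by apply/le_anti; rewrite h hge.
  have : v^T = 0 by apply: sqnorm_eq0; rewrite trmxK.
  by move/eqP; rewrite -trmx0 (inj_eq trmx_inj) (negbTE v0).
have Ksym : (L^T *m L)^T = L^T *m L by rewrite trmx_mul trmxK.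
have bnds : forall (U : 'M[R]_n) (mu : 'rV[R]_n), U^T *m U = 1%:M ->
    L^T *m L = U *m diag_mx mu *m U^T ->
    forall i, dbar <= mu 0 i /\ mu 0 i <= specnorm (L *m L^T).
  move=> U mu UU KE i.
  have [w [w0 Pw]] := eig_vec i Lu (erefl _) UU KE.
  have lb := eig_lb hPd w0 Pw.
  split => //; apply: eig_le_spec w0 Pw _.
  exact: le_trans (ltW hdbar) lb.
rewrite /loewner /Vnext.
case: (boolP (tau < 1)) => t1 /=.
  set cc := th * (1 - tau).
  have c0 : 0 < cc by rewrite mulr_gt0 // subr_gt0.
  have Msym : (1%:M - cc *: (L^T *m L))^T = 1%:M - cc *: (L^T *m L).
    by rewrite trB trZ Ksym tr_scalar_mx.
  have := eigdec_spec Msym; rewrite /mfun /=.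
  case: (eigdec _) => U d /= [UU ME].
  pose mu := \row_i ((1 - d 0 i) / cc).
  have KE : L^T *m L = U *m diag_mx mu *m U^T.
    have e : L^T *m L = cc^-1 *: (1%:M - (1%:M - cc *: (L^T *m L))).
      by rewrite opprB addrC subrK scalerA mulVf ?gt_eqF // scale1r.
    have Dmu : diag_mx mu = cc^-1 *: (1%:M - diag_mx d).
      apply/matrixP => i j; rewrite !mxE.
      have [->|ij] := eqVneq i j; first by rewrite !mulr1n mulrC.
      by rewrite !mulr0n subr0 mulr0.
    rewrite e ME Dmu -scalemxAr -scalemxAl mulmxBr mulmxBl mulmx1 (mulmx1C UU) //.
  have H : forall i, [/\ 0 < d 0 i, dbar <= mu 0 i, 0 < mu 0 i & d 0 i = 1 - cc * mu 0 i].
  move=> i; have [lb ub] := bnds U mu UU KE i.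
  have mu0 : 0 < mu 0 i by exact: lt_le_trans hdbar lb.
  have dE : d 0 i = 1 - cc * mu 0 i by rewrite mxE; field; rewrite gt_eqF.
  have d0 : 0 < d 0 i.
    rewrite dE subr_gt0; apply: le_lt_trans thn; rewrite -/cc.
    by rewrite ler_wpM2l // ltW.
  by [].
  rewrite !mulmxA; apply: (core_psd Lu UU KE) => i; have [d0 lb mu0 dE] := H i.
    by rewrite mxE; apply: powR_gt0.
  set b := 1 / (1 - tau).
  have t0 : 0 < 1 - tau by rewrite subr_gt0.
  have bE : 1 / (tau - 1) = - b by rewrite /b; field; rewrite ?subr_eq0 gt_eqF // ?lt_eqF.
  have gE : forall (f : R -> R) (x : 'rV[R]_n) j, (map_mx f x) 0 j = f (x 0 j).
    by move=> *; rewrite mxE.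
  rewrite gE bE powRN invrK.
  have b1 : 1 <= b by rewrite /b ler_pdivlMr // mul1r gerBl.
  set s := dbar / mu 0 i.
  have s0 : 0 <= s by rewrite divr_ge0 // ltW.
  have s1 : s <= 1 by rewrite ler_pdivrMr // mul1r.
  have hcv := powR_conv b1 s0 s1 (ltW d0) ler01.
  have eq1 : s * d 0 i + (1 - s) * 1 = 1 - cc * dbar.
    by rewrite dE /s; field; rewrite gt_eqF.
  rewrite eq1 powR1 mulr1 in hcv.
  set E := (1 - cc * dbar) `^ b in hcv *; set Dd := d 0 i `^ b in hcv *.
  have eq2 : (1 - E) / dbar * mu 0 i - 1 + Dd = (1 - E - s * (1 - Dd)) * (mu 0 i / dbar).
    by rewrite /s; field; rewrite !gt_eqF.
  rewrite eq2; apply: mulr_ge0; last by rewrite divr_ge0 // ltW.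
  by rewrite subr_ge0; lra.
have Msym : (th *: (L^T *m L))^T = th *: (L^T *m L) by rewrite trZ Ksym.
have := eigdec_spec Msym; rewrite /mfun /=.
case: (eigdec _) => U d /= [UU ME].
pose mu := \row_i (d 0 i / th).
have KE : L^T *m L = U *m diag_mx mu *m U^T.
  have e : L^T *m L = th^-1 *: (th *: (L^T *m L)).
    by rewrite scalerA mulVf ?gt_eqF // scale1r.
  have Dmu : diag_mx mu = th^-1 *: diag_mx d.
    apply/matrixP => i j; rewrite !mxE.
    have [->|ij] := eqVneq i j; first by rewrite !mulr1n mulrC.
    by rewrite !mulr0n mulr0.
  by rewrite e ME Dmu -scalemxAr -scalemxAl.
have H : forall i, [/\ dbar <= mu 0 i, 0 < mu 0 i & d 0 i = th * mu 0 i].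
  move=> i; have [lb ub] := bnds U mu UU KE i.
  split => //; first exact: lt_le_trans hdbar lb.
  by rewrite mxE; field; rewrite gt_eqF.
rewrite !mulmxA; apply: (core_psd Lu UU KE) => i; have [lb mu0 dE] := H i.
  by rewrite mxE; apply: expR_gt0.
have gE : forall (f : R -> R) (x : 'rV[R]_n) j, (map_mx f x) 0 j = f (x 0 j).
  by move=> *; rewrite mxE.
rewrite gE -expRN.
set s := dbar / mu 0 i.
have s0 : 0 <= s by rewrite divr_ge0 // ltW.
have s1 : s <= 1 by rewrite ler_pdivrMr // mul1r.
have hcv := expR_conv (- d 0 i) 0 s0 s1.
have eq1 : s * - d 0 i + (1 - s) * 0 = - (th * dbar).
  by rewrite dE /s; field; rewrite gt_eqF.
rewrite eq1 expR0 mulr1 in hcv.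
set E := expR (- (th * dbar)) in hcv *; set Dd := expR (- d 0 i) in hcv *.
have eq2 : (1 - E) / dbar * mu 0 i - 1 + Dd = (1 - E - s * (1 - Dd)) * (mu 0 i / dbar).
  by rewrite /s; field; rewrite !gt_eqF.
rewrite eq2; apply: mulr_ge0; last by rewrite divr_ge0 // ltW.
by rewrite subr_ge0; lra.
Qed.
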